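(* Let $X$ be a regular totally Lindelöf space and $\mathcal{F}$ a filter base on $X$ stable under countable intersections. Then there is a compact set $K\subseteq X$ such that $\mathcal{F}\vee G_\delta(K):=\{F_0\cap F_1: F_0,F_1\in\mathcal{F}\cup G_\delta(K)\}$ is a total filter base stable under countable intersections that extends $\mathcal{F}$.
   Context: A filter base on $X$ is a nonempty $\mathcal{F}\subseteq\mathcal{P}(X)$ with $\emptyset\notin\mathcal{F}$ and closed under pairwise intersections; it is stable under countable intersections if for every countable $S\subseteq\mathcal{F}$ there is $H\in\mathcal{F}$ with $H\subseteq\bigcap S$. $G_\delta(K)=\{G\subseteq X: K\subseteq G,\ G\text{ is a countable intersection of open subsets of }X\}$. $ad(\mathcal{F})=\bigcap\{\overline{F}:F\in\mathcal{F}\}$; $\mathcal{F}$ is total if every filter base $\mathcal{H}\supseteq\mathcal{F}$ satisfies $ad(\mathcal{H})\neq\emptyset$. $X$ is totally Lindelöf if every filter base on $X$ stable under countable intersections is contained in a total filter base on $X$ stable under countable intersections. *)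

(* Defs.v *)
From HB Require Import structures.
From mathcomp Require Import all_boot all_order.
From mathcomp Require Import all_classical all_reals all_analysis.
Set Implicit Arguments. Unset Strict Implicit. Unset Printing Implicit Defensive.
Local Open Scope classical_set_scope.

Section TotallyLindelof.
Context {T : topologicalType}.

Definition tl_filter_base (F : set (set T)) : Prop :=
  F !=set0 /\ ~ F set0 /\ (forall A B, F A -> F B -> F (A `&` B)).

Definition countably_stable (F : set (set T)) : Prop :=
  forall S : set (set T), S `<=` F -> countable S ->
    exists2 H, F H & H `<=` \bigcap_(A in S) A.

Definition Gdelta (K : set T) : set (set T) :=
  [set G | K `<=` G /\ exists U : nat -> set T,
             (forall n, open (U n)) /\ G = \bigcap_n U n].

Definition adh (F : set (set T)) : set T := \bigcap_(A in F) closure A.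

Definition tl_total (F : set (set T)) : Prop :=
  forall H, tl_filter_base H -> F `<=` H -> adh H !=set0.

Definition totally_Lindelof : Prop :=
  forall F, tl_filter_base F -> countably_stable F ->
    exists H, [/\ tl_filter_base H, countably_stable H, tl_total H & F `<=` H].

Definition fjoin (F G : set (set T)) : set (set T) :=
  [set C | exists A B, [/\ (F `|` G) A, (F `|` G) B & C = A `&` B]].

End TotallyLindelof.
Arguments totally_Lindelof T : clear implicits.

(* Main.v *)
Require Import Defs.
From mathcomp Require Import all_boot all_order.
From mathcomp Require Import all_classical all_reals all_analysis.
Local Open Scope classical_set_scope.

Section Helpers.
Context {T : topologicalType}.
Implicit Types (H P : set (set T)).

Lemma adh_ext H P : tl_total H -> tl_filter_base H -> P setT ->
  (forall E1 E2, P E1 -> P E2 -> P (E1 `&` E2)) ->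
  (forall A E, H A -> P E -> A `&` E !=set0) ->
  exists x, forall A E, H A -> P E -> closure (A `&` E) x.
Proof.
move=> totH [[A0 HA0] [H0 HI]] PT PI Hm.
pose H' := [set B | exists A E, [/\ H A, P E & A `&` E `<=` B]].
have fb : tl_filter_base H'.
  split; first by exists A0, A0, setT; split=> //; rewrite setIT.
  split.
    move=> [A [E [HA PE]]]; rewrite subset0 => AE0.
    by have [y] := Hm A E HA PE; rewrite AE0.
  move=> B1 B2 [A1 [E1 [HA1 PE1 s1]]] [A2 [E2 [HA2 PE2 s2]]].
  exists (A1 `&` A2), (E1 `&` E2); split; [exact: HI|exact: PI|].
  by rewrite setIACA; apply: setISS.
have [x adhx] := totH H' fb (fun A HA => ex_intro _ A (ex_intro _ setT (And3 HA PT (@subIsetl _ A setT)))).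
exists x => A E HA PE; apply: adhx; exists A, E; split => //.
Qed.

Lemma adh_compact H : regular_space T -> tl_total H -> tl_filter_base H ->
  compact (adh H).
Proof.
move=> reg totH fbH G PG GK.
have [A0 HA0] := fbH.1.
have [|||x hx] := @adh_ext H [set U | open U /\ exists2 D, G D & D `<=` U] totH fbH.
  by split; [exact: openT | exists (adh H)].
  move=> E1 E2 [op1 [D1 g1 s1]] [op2 [D2 g2 s2]]; split; first exact: openI.
  by exists (D1 `&` D2); [exact: filterI | exact: setISS].
  move=> A E HA [oE [D GD DE]].
  have [k [Dk Kk]] := filter_ex (filterI GD GK).
  apply: (Kk A HA E); apply: open_nbhs_nbhs; split => //; exact: DE.
have [A0' HA0'] := fbH.1.
exists x; split.
  move=> A HA; have := hx A setT HA.
  by rewrite setIT; apply; split; [exact: openT | exists (adh H)].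
move=> D N GD Nx.
apply: contrapT => hDN.
have [M Mx cMN] := reg x N Nx.
have oU : open (~` closure M) by rewrite openC; exact: closed_closure.
have DU : D `<=` ~` closure M.
  by move=> d Dd cMd; apply: hDN; exists d; split => //; apply: cMN.
have [y [[_ Uy] My]] := hx A0 (~` closure M) HA0 (conj oU (ex_intro2 _ _ D GD DU)) M Mx.
by apply: Uy; apply: subset_closure.
Qed.


Lemma adh_open_sub H U : tl_total H -> tl_filter_base H -> open U ->
  adh H `<=` U -> exists2 A, H A & A `<=` U.
Proof.
move=> totH fbH oU sKU; apply: contrapT => nex.
have hm : forall A E, H A -> ~` U `<=` E -> A `&` E !=set0.
  move=> A E HA sE; apply: contrapT => hAE; apply: nex; exists A => // a Aa.
  by apply: contrapT => nUa; apply: hAE; exists a; split => //; apply: sE.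
have [|||x hx] := @adh_ext H [set E | ~` U `<=` E] totH fbH.
    by [].
  by move=> E1 E2 s1 s2 y nUy; split; [apply: s1|apply: s2].
  exact: hm.
have [A0 HA0] := fbH.1.
have Kx : adh H x by move=> A HA; have := hx A setT HA; rewrite setIT; apply.
have cU : closure (~` U) x.
  by apply: (closureS _ (hx A0 (~` U) HA0 (@subset_refl _ _))); apply: subIsetr.
have cl : closed (~` U) by rewrite closedC.
by move: cU; rewrite -(closure_id _).1 //; apply; apply: sKU.
Qed.

Lemma adh_Gdelta_sub H G : tl_total H -> tl_filter_base H -> countably_stable H ->
  Gdelta (adh H) G -> exists2 A, H A & A `<=` G.
Proof.
move=> totH fbH csH [sKG [U [oU eG]]]; rewrite eG in sKG *.
have hA : forall n, exists A, H A /\ A `<=` U n.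
  move=> n; have [|A HA AU] := @adh_open_sub H (U n) totH fbH (oU n).
    by move=> x Kx; apply: (sKG x Kx); exact: I.
  by exists A.
have [Af hAf] := choice hA.
have [||A HA sA] := csH (range Af).
  - by move=> _ [n _ <-]; exact: (hAf n).1.
  - apply: (card_le_trans (card_image_le Af setT)); exact: countableP.
exists A => // x Ax n _; apply: (hAf n).2; apply: sA => //; exists n.
Qed.

Lemma Gdelta_bigcap K (W : nat -> set T) : (forall n, Gdelta K (W n)) ->
  Gdelta K (\bigcap_n W n).
Proof.
move=> hW; split; first by move=> x Kx n _; exact: (hW n).1.
have [Uf hU] := choice (fun n => (hW n).2).
pose V k := if @unpickle (nat * nat)%type k is Some p then Uf p.1 p.2 else setT.
exists V; split.
  by move=> k; rewrite /V; case: unpickle => [p|]; [exact: (hU p.1).1 | exact: openT].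
apply/seteqP; split => x hx.
  move=> k _; rewrite /V; case: unpickle => [[n m]|] //=.
  by have := hx n I; rewrite (hU n).2; apply.
move=> n _; rewrite (hU n).2 => m _.
by have := hx (pickle (n, m)) I; rewrite /V pickleK.
Qed.

Lemma GdeltaI (K G1 G2 : set T) : Gdelta K G1 -> Gdelta K G2 -> Gdelta K (G1 `&` G2).
Proof.
move=> h1 h2.
have -> : G1 `&` G2 = \bigcap_n (if n is 0 then G1 else G2).
  apply/seteqP; split => x.
    by move=> [a b] [|n] _.
  by move=> h; split; [exact: (h 0%N I) | exact: (h 1%N I)].
by apply: Gdelta_bigcap => -[|n].
Qed.

Lemma GdeltaT (K : set T) : Gdelta K setT.
Proof.
split => //; exists (fun=> setT); split => [n|]; first exact: openT.
by apply/seteqP; split => x.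
Qed.


Definition NF (F : set (set T)) K (C : set T) :=
  exists G0, Gdelta K G0 /\ (C = G0 \/ exists2 F0, F F0 & C = F0 `&` G0).

Lemma fjoinP F K C : tl_filter_base F -> fjoin F (Gdelta K) C <-> NF F K C.
Proof.
move=> [_ [_ FI]]; split.
  move=> [A [B [[FA|GA] [FB|GB] ->]]].
  - exists setT; split; first exact: GdeltaT.
    by right; exists (A `&` B); [exact: FI | rewrite setIT].
  - by exists B; split => //; right; exists A.
  - by exists A; split => //; right; exists B => //; rewrite setIC.
  - by exists (A `&` B); split; [exact: GdeltaI | left].
move=> [G0 [G0d [->|[F0 FF0 ->]]]].
  by exists G0, G0; split; [right|right|rewrite setIid].
by exists F0, G0; split; [left|right|].
Qed.

Lemma NFI F K C1 C2 : tl_filter_base F -> NF F K C1 -> NF F K C2 -> NF F K (C1 `&` C2).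
Proof.
move=> [_ [_ FI]] [G1 [g1 [->|[F1 f1 ->]]]] [G2 [g2 [->|[F2 f2 ->]]]].
- by exists (G1 `&` G2); split; [exact: GdeltaI | left].
- exists (G1 `&` G2); split; first exact: GdeltaI.
  by right; exists F2 => //; rewrite setICA.
- exists (G1 `&` G2); split; first exact: GdeltaI.
  by right; exists F1 => //; rewrite setIA.
- exists (G1 `&` G2); split; first exact: GdeltaI.
  by right; exists (F1 `&` F2); [exact: FI | rewrite setIACA].
Qed.

End Helpers.

Theorem proposition2p4 (T : topologicalType) :
  regular_space T -> totally_Lindelof T ->
  forall F : set (set T), tl_filter_base F -> countably_stable F ->
  exists K : set T, compact K /\
    [/\ tl_filter_base (fjoin F (Gdelta K)), countably_stable (fjoin F (Gdelta K)),
        tl_total (fjoin F (Gdelta K)) & (F `<=` fjoin F (Gdelta K))].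
Proof.
move=> reg TL F fbF csF.
have [H [fbH csH totH FH]] := TL F fbF csF.
exists (adh H); split; first exact: adh_compact.
set K := adh H.
have [[f0 Ff0] [F0n FI]] := fbF.
have [_ [H0n HI]] := fbH.
have meet : forall E, (F `|` Gdelta K) E -> exists2 A, H A & A `<=` E.
  move=> E [FE|GE]; first by exists E => //; apply: FH.
  exact: adh_Gdelta_sub.
have fb : tl_filter_base (fjoin F (Gdelta K)).
  split; first by exists (f0 `&` f0), f0, f0; split => //; left.
  split.
    move=> [A [B [mA mB e]]].
    have [A1 HA1 sA1] := meet A mA; have [B1 HB1 sB1] := meet B mB.
    have e0 : A1 `&` B1 = set0 by rewrite -subset0 e; exact: setISS.
    by apply: H0n; rewrite -e0; apply: HI.
  move=> C1 C2 /(fjoinP _ _ _ fbF) n1 /(fjoinP _ _ _ fbF) n2.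
  by apply/(fjoinP _ _ _ fbF); apply: NFI.
split => //.
- move=> S SS cS.
  have [f finj] := countable_injP _ cS.
  have hq : forall n : nat, exists q : set T * set T,
      [/\ F q.1, Gdelta K q.2 & forall C, S C -> f C = n -> q.1 `&` q.2 `<=` C].
    move=> n; case: (pselect (exists C, S C /\ f C = n)) => [[C [SC fC]]|nC].
      have eqC : forall C', S C' -> f C' = n -> C' = C.
        move=> C' SC' fC'; apply: finj; rewrite ?inE //; by rewrite fC fC'.
      have [G0 [gG0 [eC|[F0 FF0 eC]]]] := (fjoinP _ _ _ fbF).1 (SS C SC).
        exists (f0, G0); split => // C' SC' fC'; rewrite (eqC C' SC' fC') eC.
        exact: subIsetr.
      by exists (F0, G0); split => // C' SC' fC'; rewrite (eqC C' SC' fC') eC.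
    exists (f0, setT); split => //; first exact: GdeltaT.
    by move=> C SC fC; exfalso; apply: nC; exists C.
  have [q hqq] := choice hq.
  have [||F1 FF1 sF1] := csF (range (fun n => (q n).1)).
      by move=> _ [n _ <-]; have [] := hqq n.
    apply: (card_le_trans (card_image_le _ setT)); exact: countableP.
  exists (F1 `&` \bigcap_n (q n).2).
    apply/(fjoinP _ _ _ fbF); exists (\bigcap_n (q n).2); split; last by right; exists F1.
    by apply: Gdelta_bigcap => n; have [] := hqq n.
  move=> x [F1x Gx] C SC.
  have [_ _ sub] := hqq (f C); apply: (sub C SC erefl); split.
    by apply: (sF1 x F1x); exists (f C).
  exact: Gx.
- move=> H' [[B0 HB0] [H'0 H'I]] sH'.
  have ne : forall B, H' B -> closure B `&` K !=set0.
    move=> B HB; apply: contrapT => hne.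
    have gd : Gdelta K (~` closure B).
      split.
        by move=> k Kk cBk; apply: hne; exists k.
      exists (fun=> ~` closure B); split.
        by move=> _; rewrite openC; exact: closed_closure.
      by apply/seteqP; split => x; [move=> h n _ | move=> /(_ 0%N I)].
    have : H' (B `&` ~` closure B).
      apply: H'I => //; apply: sH'; apply/(fjoinP _ _ _ fbF).
      by exists (~` closure B); split => //; left.
    rewrite (_ : B `&` ~` closure B = set0) //.
    by apply/seteqP; split => x // [Bx]; apply; exact: subset_closure.
  pose G := filter_from H' (fun B => closure B `&` K).
  have FG : Filter G.
    apply: filter_from_filter; first by exists B0.
    move=> i j Hi Hj; exists (i `&` j); first exact: H'I.
    move=> x [cx Kx]; have [ci cj] := closureI cx; by split; split.
  have PG : ProperFilter G by apply: filter_from_proper.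
  have GK : G K by exists B0 => //; exact: subIsetr.
  have [x [Kx cx]] := @adh_compact T H reg totH fbH G PG GK.
  exists x => B HB.
  have : closure (closure B `&` K) x.
    by move=> N Nx; apply: cx => //; exists B.
  move/(closureS (@subIsetl _ (closure B) K)).
  by rewrite -(closure_id _).1 //; exact: closed_closure.
- by move=> A FA; exists A, A; split; [left|left|rewrite setIid].
Qed.
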